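(* Let $b\ge2$ be an integer and let $w=d_1\dots d_p$ be a fixed block of $b$-ary digits with $p\ge1$. Let $u=d_1\dots d_{p-1}$ and $v=d_2\dots d_p$. Then $Z_w(\epsilon,0,u)=Z_w(v,0)$ as power series in $t$.
   Context: Strings are finite sequences over $\{0,\dots,b-1\}$, and $\epsilon$ is the empty string. $k_w(X)$ is the number of possibly overlapping occurrences of $w$ in $X$. $Z_w(\epsilon,0,u)=\sum_l a_lt^l$, where $a_l$ is the number of strings of length $l$ with $k_w=0$ and suffix $u$. $Z_w(v,0)=\sum_l c_lt^l$, where $c_l$ is the number of strings of length $l$ with $k_w=0$ and prefix $v$. *)

(* Defs.v *)
From mathcomp Require Import all_boot.
Set Implicit Arguments. Unset Strict Implicit. Unset Printing Implicit Defensive.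

Definition occ (b : nat) (w X : seq 'I_b) : nat :=
  if size w <= size X then
    count (fun i => take (size w) (drop i X) == w) (iota 0 (size X - size w).+1)
  else 0.

(* a_l: number of strings of length l with k_w = 0 and suffix u;
   the power series Z_w(eps,0,u) = sum_l a_l t^l is identified with
   its coefficient sequence. *)
Definition Z_suffix (b : nat) (w u : seq 'I_b) (l : nat) : nat :=
  #|[set X : l.-tuple 'I_b | (occ w X == 0) && suffix u X]|.

(* c_l: number of strings of length l with k_w = 0 and prefix v;
   Z_w(v,0) = sum_l c_l t^l. *)
Definition Z_prefix (b : nat) (w v : seq 'I_b) (l : nat) : nat :=
  #|[set X : l.-tuple 'I_b | (occ w X == 0) && prefix v X]|.

(* Main.v *)
Require Import Defs.
From mathcomp Require Import all_boot.

Lemma occ0 (b : nat) (w X : seq 'I_b) : (occ w X == 0) = ~~ infix w X.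
Proof.
rewrite /occ; case: leqP => Hs; last first.
  apply/esym/negP => /infixP [s [s' HX]].
  by move: Hs; rewrite HX !size_cat ltnNge addnCA leq_addr.
rewrite eqn0Ngt -has_count; congr negb; apply/hasP/infixP.
  move=> [i _ /eqP Hi]; exists (take i X), (drop (size w) (drop i X)).
  by rewrite -{1}Hi !cat_take_drop.
move=> [s [s' HX]]; exists (size s).
  rewrite mem_iota /= add0n ltnS HX !size_cat.
  by rewrite addnA -addnA [size w + _]addnC addnA addnK leq_addr.
by rewrite HX drop_size_cat // take_size_cat.
Qed.

Lemma card_sum (T : finType) (P : pred T) :
  #|[set x | P x]| = \sum_(x : T) (P x : nat).
Proof.
rewrite cardsE -sum1_card big_mkcond /=; apply: eq_bigr => x _.
by rewrite unfold_in; case: (P x).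
Qed.

Lemma thead_head (T : Type) n (t : n.+1.-tuple T) x0 : thead t = head x0 t.
Proof. by case: t => [[|x s] //] ?; rewrite /thead (tnth_nth x0). Qed.

Lemma cons_sum (b l : nat) (G : l.+1.-tuple 'I_b -> nat) :
  \sum_(Y : l.+1.-tuple 'I_b) G Y =
  \sum_(d : 'I_b) \sum_(X : l.-tuple 'I_b) G [tuple of d :: X].
Proof.
rewrite pair_big /=.
rewrite (reindex (fun p : 'I_b * l.-tuple 'I_b => [tuple of p.1 :: p.2])) //=.
apply: onW_bij; exists (fun Y => (thead Y, behead_tuple Y)).
  by move=> [d X]; rewrite theadE; congr pair; apply: val_inj.
by move=> Y; rewrite [RHS]tuple_eta.
Qed.

Lemma rcons_sum (b l : nat) (G : l.+1.-tuple 'I_b -> nat) :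
  \sum_(Y : l.+1.-tuple 'I_b) G Y =
  \sum_(X : l.-tuple 'I_b) \sum_(d : 'I_b) G [tuple of rcons X d].
Proof.
rewrite pair_big /=.
rewrite (reindex (fun p : l.-tuple 'I_b * 'I_b => [tuple of rcons p.1 p.2])) //=.
apply: onW_bij.
exists (fun Y : l.+1.-tuple 'I_b => ([tuple of rev (behead (rev Y))], thead [tuple of rev Y])).
  move=> [X d] /=; congr pair.
    by apply: val_inj => /=; rewrite rev_rcons /= revK.
  by rewrite (thead_head _ _ _ d) /= rev_rcons.
move=> Y; apply: val_inj => /=.
rewrite (thead_head _ _ _ (thead Y)) /=.
case: Y => s Hs /=; move: Hs; case/lastP: s => [|s x] //= Hs.
by rewrite rev_rcons /= revK.
Qed.

Lemma pw (p q : bool) : (~~ q : nat) = (~~ (p || q) : nat) + (p && ~~ q : nat).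
Proof. by case: p; case: q. Qed.

Lemma sum_eq1 (b : nat) (d1 : 'I_b) (Q : bool) :
  \sum_(d : 'I_b) ((d1 == d) && Q : nat) = Q.
Proof.
rewrite (bigD1 d1) //= eqxx big1 ?addn0 // => d /negbTE.
by rewrite eq_sym => ->.
Qed.

Theorem lemma6 (b : nat) (w : seq 'I_b) :
  2 <= b -> 1 <= size w ->
  forall l : nat,
    Z_suffix w (take (size w).-1 w) l = Z_prefix w (behead w) l.
Proof.
move=> _ Hw l.
have [u [x Hux]] : exists u x, w = rcons u x.
  by case/lastP: w Hw => [//|u x] _; exists u, x.
have [x' [v Hxv]] : exists x v, w = x :: v.
  by case: w Hw {Hux} => [//|x0 v] _; exists x0, v.
pose F k := \sum_(X : k.-tuple 'I_b) (~~ infix w X : nat).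
have HA : b * F l = F l.+1 + Z_suffix w (take (size w).-1 w) l.
  have -> : take (size w).-1 w = u.
    by rewrite Hux size_rcons /= -cats1 take_size_cat.
  rewrite /Z_suffix card_sum /F rcons_sum big_distrr -big_split /=.
  apply: eq_bigr => X _.
  rewrite -[b in b * _]card_ord -sum_nat_const.
  rewrite -(sum_eq1 _ x ((occ w X == 0) && suffix u X)).
  rewrite -big_split /=; apply: eq_bigr => d _.
  rewrite occ0 infix_rconsl (pw (suffix w (rcons X d))); congr (_ + _).
  rewrite Hux suffix_rcons.
  by case: (x == d); case: (suffix u X); case: (infix _ X).
have HC : b * F l = F l.+1 + Z_prefix w (behead w) l.
  have -> : behead w = v by rewrite Hxv.
  rewrite /Z_prefix card_sum /F cons_sum /=.
  rewrite exchange_big /= big_distrr -big_split /=.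
  apply: eq_bigr => X _.
  rewrite -[b in b * _]card_ord -sum_nat_const.
  rewrite -(sum_eq1 _ x' ((occ w X == 0) && prefix v X)).
  rewrite -big_split /=; apply: eq_bigr => d _.
  rewrite occ0 Hxv /=.
  by case: (x' == d); case: (prefix v X); case: (infix _ X).
by apply/eqP; rewrite -(eqn_add2l (F l.+1)) -HA -HC.
Qed.
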